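(* Let $(\mathcal I,T)$ be of class $\mathcal{DR}$. If its block system is generating, then $(\mathcal I,T)$ is generating.
   Context: Let $\mathcal I=[0,1]$. A binary dynamical system is given by $c\in]0,1[$ and two $C^2$ bijections, $a:[0,1]\to[0,c]$ and $b:[0,1]\to[c,1]$. The map $T$ equals $a^{-1}$ on $]0,c[$ and $b^{-1}$ on $]c,1[$. Class $\mathcal{DR}$: $a$ is increasing, $b$ is decreasing, $a(0)=0$, $a(1)=c$, $b(0)=1$, $b(1)=c$, $a'>0$ and $b'<0$ on $[0,1]$, and $a'(x)<1$, $b'(x)>-1$ for $x\in]0,1]$. The system $(\mathcal I,T)$ is generating if the intervals $h_w(\mathcal I)$, for $w\in\{0,1\}^k$ and $k\ge1$, generate the Borel $\sigma$-algebra of $\mathcal I$. Here $h_0=a$, $h_1=b$, and $h_w=h_{w_1}\circ\cdots\circ h_{w_k}$. With $q(n)=a^n(1)$ and $g_m=a^{m-1}\circ b$ ($m\ge1$), the block system has inverse branches $g_m$. It is generating if the intervals $g_{m_1}\circ\cdots\circ g_{m_n}(\mathcal I)$, for $n\ge1$ and $m_i\ge1$, generate the Borel $\sigma$-algebra. Equivalently, their maximal diameter over all $(m_1,\dots,m_n)$ tends to $0$ as $n\to\infty$. *)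

(* Defs.v *)
From HB Require Import structures.
From mathcomp Require Import all_boot all_order all_algebra.
From mathcomp Require Import all_classical all_reals all_analysis.
Set Implicit Arguments. Unset Strict Implicit. Unset Printing Implicit Defensive.
Import Order.TTheory GRing.Theory Num.Theory.
Import numFieldNormedType.Exports.
Local Open Scope classical_set_scope.
Local Open Scope ring_scope.

Section Defs.
Variable R : realType.

(** [f] is C^2 on the closed interval [0,1]: it is (the restriction of) a
    function which is twice differentiable with continuous second derivative
    on an open interval containing [0,1].  Derivatives at the endpoints are
    therefore ordinary (two-sided) derivatives of this extension, which agree
    with the one-sided derivatives of the restriction. *)
Definition C2_on01 (f : R -> R) : Prop :=
  exists e : R, 0 < e /\
    forall x : R, -e < x < 1 + e ->
      [/\ derivable f x 1, derivable (derive1 f) x 1 & {for x, continuous (derive1 (derive1 f))}].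

Definition class_DR (c : R) (a b : R -> R) : Prop :=
  [/\ 0 < c < 1,
      C2_on01 a, C2_on01 b,
      set_bij `[0, 1] `[0, c] a & set_bij `[0, 1] `[c, 1] b]
  /\
  [/\ {in `[0, 1] &, {homo a : x y / x < y}},
      {in `[0, 1] &, {homo b : x y / x < y >-> y < x}},
      [/\ a 0 = 0, a 1 = c, b 0 = 1 & b 1 = c],
      (forall x, x \in `[0, 1] -> 0 < derive1 a x /\ derive1 b x < 0) &
      (forall x, x \in `]0, 1] -> derive1 a x < 1 /\ -1 < derive1 b x)].

(** h_w = h_{w_1} o ... o h_{w_k}, with h_0 = a (false) and h_1 = b (true). *)
Definition hw (a b : R -> R) (w : seq bool) : R -> R :=
  foldr (fun (d : bool) f => (if d then b else a) \o f) id w.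

Definition gm (a b : R -> R) (m : nat) : R -> R := iter m.-1 a \o b.

Definition gms (a b : R -> R) (ms : seq nat) : R -> R :=
  foldr (fun m f => gm a b m \o f) id ms.

Definition borel01 : set (set R) :=
  <<s `[0, 1], [set `[0, 1] `&` O | O in [set O : set R | open O]] >>.

Definition cylinders (a b : R -> R) : set (set R) :=
  [set hw a b w @` `[0, 1] | w in [set w : seq bool | (0 < size w)%N]].

Definition block_cylinders (a b : R -> R) : set (set R) :=
  [set gms a b ms @` `[0, 1] |
     ms in [set ms : seq nat | (0 < size ms)%N /\ all (fun m => 0 < m)%N ms]].

Definition generating (a b : R -> R) : Prop :=
  <<s `[0, 1], cylinders a b >> = borel01.

Definition block_generating (a b : R -> R) : Prop :=
  <<s `[0, 1], block_cylinders a b >> = borel01.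

End Defs.

(* Main.v *)
Require Import Defs.
From HB Require Import structures.
From mathcomp Require Import all_boot all_order all_algebra.
From mathcomp Require Import all_classical all_reals all_analysis.
Set Implicit Arguments. Unset Strict Implicit. Unset Printing Implicit Defensive.
Import Order.TTheory GRing.Theory Num.Theory.
Import numFieldNormedType.Exports.
Local Open Scope classical_set_scope.
Local Open Scope ring_scope.

Lemma C2_cont (R : realType) (f : R -> R) : C2_on01 f ->
  forall x : R, x \in `[0, 1] -> {for x, continuous f}.
Proof.
case=> e [e0 He] x; rewrite in_itv /= => /andP[x0 x1].
apply: differentiable_continuous; apply/derivable1_diffP.
have [] := He x; last by [].
apply/andP; split.
- by apply: (lt_le_trans _ x0); rewrite oppr_lt0.
- by apply: (le_lt_trans x1); rewrite ltrDl.
Qed.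

Lemma hw_word (R : realType) (a b : R -> R) (k : nat) (w : seq bool) :
  hw a b (nseq k false ++ w) = iter k a \o hw a b w.
Proof.
elim: k => [|k IH] /=; first by apply/funext.
by rewrite IH; apply/funext => x.
Qed.

Definition word (m : nat) : seq bool := nseq m.-1 false ++ [:: true].

Lemma hw_cat (R : realType) (a b : R -> R) (u v : seq bool) :
  hw a b (u ++ v) = hw a b u \o hw a b v.
Proof.
elim: u => [|d u IH] /=; first by apply/funext.
by rewrite IH; apply/funext.
Qed.

Lemma gms_hw (R : realType) (a b : R -> R) (ms : seq nat) :
  gms a b ms = hw a b (flatten (map word ms)).
Proof.
elim: ms => [|m ms IH] /=; first by [].
rewrite hw_cat -IH /word hw_word /gm; apply/funext => x /=.
by [].
Qed.

Theorem proposition3p7 (R : realType) (c : R) (a b : R -> R) :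
  class_DR c a b -> block_generating a b -> generating a b.
Proof.
move=> [[/andP[c0 c1] Ca Cb [Ma _ _] [Mb _ _]] _] Hbg.
have into : forall w x, x \in `[0, 1] ->
    hw a b w x \in `[0, 1] /\ {for x, continuous (hw a b w)}.
  elim=> [|d w IH] x Hx /=.
    by split => //; apply: cvg_id.
  have [Hw Cw] := IH x Hx.
  case: d.
  - split.
      have := Mb _ Hw; rewrite /= !in_itv /= => /andP[h1 h2].
      by apply/andP; split => //; exact: le_trans (ltW c0) h1.
    by apply: continuous_comp => //; apply: C2_cont.
  - split.
      have := Ma _ Hw; rewrite /= !in_itv /= => /andP[h1 h2].
      by apply/andP; split => //; exact: le_trans h2 (ltW c1).
    by apply: continuous_comp => //; apply: C2_cont.
have cyl_borel : cylinders a b `<=` @borel01 R.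
  move=> _ [w _ <-].
  set C := hw a b w @` `[0, 1].
  have cC : closed C.
    apply: compact_closed; first exact: norm_hausdorff.
    apply: continuous_compact; last exact: segment_compact.
    apply: continuous_in_subspaceT => x Hx.
    by have [] := into w x (set_mem Hx).
  have sub : C `<=` `[0, 1].
    move=> _ [x Hx <-]; have [] := into w x Hx.
    by [].

  have -> : C = `[0, 1] `\` (`[0, 1] `&` ~` C).
    apply/seteqP; split => x.
      by move=> Cx; split; [exact: sub | case => _].
    by move=> [H1 H2]; apply: contrapT => nC; apply: H2.
  apply: sigma_algebraCD; apply: sub_gen_smallest.
  exists (~` C); last by []. apply: closed_openC; exact: cC.
have blk_cyl : block_cylinders a b `<=` cylinders a b.
  move=> _ [ms [ms0 allm] <-].
  exists (flatten (map word ms)); last by rewrite gms_hw.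
  rewrite /=; case: ms ms0 allm => [|m ms] //= _ _.
  by rewrite size_cat /word size_cat /= addn1.
apply/seteqP; split.
- apply: smallest_sub; last exact: cyl_borel.
  rewrite /borel01; exact: smallest_sigma_algebra.
- rewrite -Hbg; apply: smallest_sub; first exact: smallest_sigma_algebra.
  by move=> A /blk_cyl; apply: sub_gen_smallest.
Qed.
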